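(* Let $T$ be a finite rooted tree each of whose nodes $v$ carries a label $\ell(v)\in\mathbb{N}=\{1,2,\dots\}$. For $i\in\mathbb{N}$ let $p_i$ denote the $i$-th prime number. For each node $v$ let $n_v$ be the number of vertices in the subtree $T_v$ rooted at $v$, and define $C_v(x)\in\mathbb{Z}[x]$ inductively by $C_v(x)=x+p_{\ell(v)}$ if $v$ is a leaf, and $C_v(x)=x^{n_v}+p_{\ell(v)}\,x\prod_{u\text{ child of }v}C_u(x)+p_{\ell(v)}$ if $v$ is an internal node. Then for every vertex $v$ of $T$, $C_v(x)$ is irreducible over $\mathbb{Q}$.
   Context: $T_v$ consists of $v$ and all its descendants; $p_1=2,p_2=3,\dots$. *)

(* Defs.v *)
From HB Require Import structures.
From mathcomp Require Import all_boot all_order all_algebra.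
Set Implicit Arguments. Unset Strict Implicit. Unset Printing Implicit Defensive.
Import Order.TTheory GRing.Theory Num.Theory.

Inductive ltree : Type := Node of nat & seq ltree.

Definition label (t : ltree) : nat := let: Node l _ := t in l.
Definition children (t : ltree) : seq ltree := let: Node _ cs := t in cs.

Fixpoint labels_pos (t : ltree) : bool :=
  let: Node l cs := t in (0 < l) && all labels_pos cs.

Fixpoint tsize (t : ltree) : nat :=
  let: Node _ cs := t in (sumn (map tsize cs)).+1.

Fixpoint subtrees (t : ltree) : seq ltree :=
  let: Node _ cs := t in t :: flatten (map subtrees cs).

(* p_i : the i-th prime, p_1 = 2, p_2 = 3, ... *)
Lemma next_prime_ex (m : nat) : exists p, (m < p) && prime p.
Proof. case: (prime_above m) => p H1 H2; exists p; by rewrite H1 H2. Qed.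

Definition next_prime (m : nat) : nat := ex_minn (next_prime_ex m).

Fixpoint ith_prime (i : nat) : nat :=
  match i with 0 => 1 | k.+1 => next_prime (ith_prime k) end.

Local Open Scope ring_scope.

Fixpoint Cpoly (t : ltree) : {poly int} :=
  let: Node l cs := t in
  let p : {poly int} := ((ith_prime l)%:R)%:P in
  if cs is [::] then 'X + p
  else 'X^(tsize t) + p * 'X * \prod_(q <- map Cpoly cs) q + p.

(* v is (the subtree T_v at) a vertex of t *)
Fixpoint vertex_of (t v : ltree) : Prop :=
  let: Node _ cs := t in v = t \/ foldr (fun c P => vertex_of c v \/ P) False cs.

(* Main.v *)
Require Import Defs.
From mathcomp Require Import all_boot all_order all_algebra zify.
Import Order.TTheory GRing.Theory Num.Theory.
Local Open Scope ring_scope.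

Lemma size_form (p n : nat) (P : {poly int}) : (0 < n)%N -> (size P <= n)%N ->
  (size ('X^n + ((p%:R : int)%:P) * 'X * P + (p%:R : int)%:P)%R <= n.+1)%N.
Proof.
move=> n0 sP; apply/leq_sizeP => j hj.
rewrite !coefD coefXn -mulrA coefCM coefXM coefC.
have -> : (j == n) = false by apply/negbTE; rewrite neq_ltn hj orbT.
have -> : (j == 0%N) = false by case: j hj.
have -> : P`_j.-1 = 0 by apply/(leq_sizeP _ _ sP); case: j hj => //.
by rewrite mulr0 !addr0.
Qed.

Lemma eis_gen (p n : nat) (P : {poly int}) : prime p -> (0 < n)%N -> (size P <= n)%N ->
  irreducible_poly (map_poly (intr : int -> rat)
     ('X^n + ((p%:R : int)%:P) * 'X * P + (p%:R : int)%:P)).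
Proof.
move=> pp n0 sP.
set q := (X in map_poly _ X).
have qE i : q`_i = (i == n)%:R + p%:R * (if i == 0%N then 0 else P`_i.-1)
   + (if i == 0%N then p%:R else 0).
  by rewrite /q !coefD coefXn -mulrA coefCM coefXM coefC.
have p1 : (1 < p)%N by apply: prime_gt1.
have hdiv x : (p%:Z %| p%:R * x)%Z by rewrite natz; apply: dvdz_mulr; apply: dvdzz.
have hsz : (size q <= n.+1)%N.
  apply/leq_sizeP => j hj; rewrite qE.
  have -> : (j == n) = false by apply/negbTE; rewrite neq_ltn hj orbT.
  have -> : (j == 0%N) = false by case: j hj.
  have -> : P`_j.-1 = 0 by apply/(leq_sizeP _ _ sP); case: j hj => //.
  by rewrite mulr0 !addr0.
have hn : ~~ (p%:Z %| q`_n)%Z.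
  rewrite qE eqxx -addrA rpredDr; last first.
    by apply: rpredD; [apply: hdiv | case: eqP => _; [rewrite natz dvdzz|apply: dvdz0]].
  by rewrite dvdz1 /=; apply/negP => /eqP h; rewrite h in p1.
have qn0 : q`_n != 0 by apply: contraNneq hn => ->; apply: dvdz0.
have szq : size q = n.+1.
  apply/eqP; rewrite eqn_leq hsz /=; rewrite ltnNge; apply/negP => /leq_sizeP h.
  by move: qn0; rewrite h.
apply/irreducible_rat_int.
apply: (@eisenstein_crit p) => //.
- by rewrite szq eqSS -lt0n.
- by rewrite lead_coefE szq.
- rewrite qE /= mulr0.
  have -> : (0%N == n) = false by apply/negbTE; rewrite eq_sym -lt0n.
  rewrite mulr0n !add0r natz dvdzE !absz_nat.
  apply/negP => /dvdn_leq h; have := h (prime_gt0 pp).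
  rewrite expr2 => h2; have h3 : (p * p <= p)%N := h2; nia.
- move=> i hi0; have hi : (i < n)%N by rewrite -[n]/((n.+1).-1) -szq; exact: hi0.
  rewrite qE.
  have -> : (i == n) = false by apply/negbTE; rewrite neq_ltn hi.
  rewrite add0r; apply: rpredD; first exact: hdiv.
  by case: eqP => _; [rewrite natz dvdzz|apply: dvdz0].
Qed.

Lemma ith_prime_prime i : (0 < i)%N -> prime (ith_prime i).
Proof.
case: i => // i _ /=; rewrite /next_prime.
by case: ex_minnP => m /andP[_ ->].
Qed.

Lemma aux_le a b x y : (a <= x.+1)%N -> (b <= y.+1)%N -> ((a+b).-1 <= (x+y).+1)%N.
Proof. lia. Qed.

Fixpoint ltree_ind' (P : ltree -> Prop)
  (H : forall l cs, List.Forall P cs -> P (Node l cs)) (t : ltree) : P t :=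
  match t with
  | Node l cs => H l cs ((fix F (cs : seq ltree) : List.Forall P cs :=
       match cs with
       | [::] => List.Forall_nil P
       | c :: cs' => @List.Forall_cons _ P c cs' (ltree_ind' P H c) (F cs')
       end) cs)
  end.

Lemma size_Cpoly t : (size (Cpoly t) <= (Defs.tsize t).+1)%N.
Proof.
move: t; apply: ltree_ind' => l cs IH.
have hP : (size (\prod_(q <- map Cpoly cs) q)%R <= (sumn (map Defs.tsize cs)).+1)%N.
  elim: cs IH => [|c cs IHc] IH; first by rewrite big_nil size_poly1.
  inversion IH as [|c' cs' Hc Hcs]; subst.
  rewrite /= big_cons.
  apply: leq_trans (size_polyMleq _ _) _.
  apply: aux_le. exact: Hc. exact: (IHc Hcs).
case: cs IH hP => [|c cs] IH hP /=.
  apply: leq_trans (size_polyD _ _) _; rewrite geq_max size_polyX leqnn /=.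
  exact: leq_trans (size_polyC_leq1 _) _.
apply: size_form => //; exact: hP.
Qed.

Lemma Cpoly_form t : exists P : {poly int}, (size P <= Defs.tsize t)%N /\
  Cpoly t = 'X^(Defs.tsize t) + (((ith_prime (label t))%:R : int)%:P) * 'X * P
     + ((ith_prime (label t))%:R : int)%:P.
Proof.
case: t => l [|c cs].
  exists 0; rewrite size_poly0; split => //=.
  by rewrite mulr0 addr0 expr1.
exists (\prod_(q <- map Cpoly (c :: cs)) q); split => //.
move: (c :: cs) => {c}cs /=.
elim: cs => [|c cs IHc]; first by rewrite big_nil size_poly1.
rewrite /= big_cons; apply: leq_trans (size_polyMleq _ _) _.
exact: aux_le (size_Cpoly c) IHc.
Qed.

Lemma labels_vertex (t : ltree) : labels_pos t -> forall v, vertex_of t v -> labels_pos v.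
Proof.
move: t; apply: ltree_ind' => l cs IH /= /andP[l0 hcs] v [->|hv]; first by rewrite /= l0 hcs.
elim: cs IH hcs hv => [|c cs IHc] IH //= /andP[hc hcs] [hv|hv].
  by inversion IH; subst; eauto.
by inversion IH; subst; apply: IHc.
Qed.

Theorem mainTheorem4 (T : ltree) :
  labels_pos T ->
  forall v : ltree, vertex_of T v ->
    irreducible_poly (map_poly (intr : int -> rat) (Cpoly v)).
Proof.
move=> hT v hv; have hv' := @labels_vertex T hT v hv.
have [P [sP ->]] := Cpoly_form v.
apply: eis_gen => //.
  by apply: ith_prime_prime; case: v hv hv' {sP} => l cs _ /= /andP[].
by case: v {hv hv' sP}.
Qed.
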